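(* Let $\mathbf a=(a_0,a_1,\ldots)$ be an integer sequence, and let $\mathbf m$ and $\mathbf b$ be its double-ox middle and transformed sequences. Then the exponential generating functions $\mathcal A(x)=\sum a_nx^n/n!$, $\mathcal M(x)=\sum m_nx^n/n!$, $\mathcal B(x)=\sum b_nx^n/n!$ satisfy, as formal power series, $$\mathcal M(x)=\frac{1}{\cos x-\sin x}\,\mathcal A(x),\qquad \mathcal B(x)=\frac{\cos x+\sin x}{\cos x-\sin x}\,\mathcal A(x).$$
   Context: Double-ox transform: given $\mathbf a$, define two triangular arrays $L_{n,k}$, $R_{n,k}$ ($0\le k\le n$) as follows. For $n\ge k\ge0$: $L_{n+1,k+1}=L_{n+1,k}+L_{n,n-k}$ and $R_{n+1,k+1}=R_{n+1,k}+R_{n,n-k}$. The first entries of the rows are: $L_{2i,0}=a_{2i}$, $R_{2i+1,0}=a_{2i+1}$, $R_{2i,0}=L_{2i,2i}$, $L_{2i+1,0}=R_{2i+1,2i+1}$ for $i\ge0$ (so rows are computed in the order $L$ row $0$, $R$ row $0$, $R$ row $1$, $L$ row $1$, $L$ row $2$, $R$ row $2$, \dots). Then the middle sequence is $m_{2i}=L_{2i,2i}$, $m_{2i+1}=R_{2i+1,2i+1}$, and the transformed sequence is $b_{2i}=R_{2i,2i}$, $b_{2i+1}=L_{2i+1,2i+1}$. (For example, $\mathbf a=(1,1,1,\ldots)$ gives $\mathbf b=(1,3,9,35,177,\ldots)$.) *)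

(* Defs.v *)
From mathcomp Require Import all_boot all_order all_algebra.
Set Implicit Arguments. Unset Strict Implicit. Unset Printing Implicit Defensive.
Import Order.TTheory GRing.Theory Num.Theory.
Local Open Scope ring_scope.

(* Given the first entry [f] of row n+1 and row n [prev] (entries
   X_{n,0..n}), compute row n+1 via X_{n+1,k+1} = X_{n+1,k} + X_{n,n-k}. *)
Definition next_row (f : int) (prev : seq int) : seq int :=
  f :: scanl +%R f (rev prev).

(* ox_rows a n = (row n of L, row n of R), computed in the order
   L0, R0, R1, L1, L2, R2, ... *)
Fixpoint ox_rows (a : nat -> int) (n : nat) : seq int * seq int :=
  match n with
  | 0%N => ([:: a 0%N], [:: a 0%N])
  | n'.+1 =>
      let (l, r) := ox_rows a n' in
      if odd n'.+1 then
        let r' := next_row (a n'.+1) r in (next_row (last 0 r') l, r')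
      else
        let l' := next_row (a n'.+1) l in (l', next_row (last 0 l') r)
  end.

Definition oxL (a : nat -> int) n := (ox_rows a n).1.
Definition oxR (a : nat -> int) n := (ox_rows a n).2.

Definition ox_middle (a : nat -> int) (n : nat) : int :=
  if odd n then last 0 (oxR a n) else last 0 (oxL a n).
Definition ox_transform (a : nat -> int) (n : nat) : int :=
  if odd n then last 0 (oxL a n) else last 0 (oxR a n).

Definition fps := nat -> rat.
Definition fps_mul (f g : fps) : fps :=
  fun n => \sum_(i < n.+1) f i * g (n - i)%N.
Definition fps_add (f g : fps) : fps := fun n => f n + g n.
Definition fps_sub (f g : fps) : fps := fun n => f n - g n.

Definition egf (a : nat -> int) : fps := fun n => (a n)%:~R / (n`!)%:R.

Definition fps_cos : fps :=
  fun n => if odd n then 0 else (-1) ^+ (n./2) / (n`!)%:R.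
Definition fps_sin : fps :=
  fun n => if odd n then (-1) ^+ (n./2) / (n`!)%:R else 0.

(* Main.v *)
Require Import Defs.
From mathcomp Require Import all_boot all_order all_algebra.
From mathcomp Require Import ring.
From Stdlib Require Import FunctionalExtensionality.
Set Implicit Arguments. Unset Strict Implicit. Unset Printing Implicit Defensive.
Import Order.TTheory GRing.Theory Num.Theory.
Local Open Scope ring_scope.

Lemma nth_scanl_add (f : int) s k : (k < size s)%N ->
  nth 0 (scanl +%R f s) k = f + \sum_(i < k.+1) nth 0 s i.
Proof.
elim: s f k => [|x s IH] f [|k] //= Hk.
  by rewrite big_ord1 /=.
by rewrite IH // [in RHS]big_ord_recl addrA.
Qed.

Lemma nth_next_row f prev k : (k <= size prev)%N ->
  nth 0 (next_row f prev) k = f + \sum_(i < k) nth 0 (rev prev) i.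
Proof.
case: k => [|k] Hk; first by rewrite big_ord0 addr0.
by rewrite /next_row /= nth_scanl_add // size_rev.
Qed.

Lemma size_next_row f p : size (next_row f p) = (size p).+1.
Proof. by rewrite /next_row /= size_scanl size_rev. Qed.

Definition Zrow a n := if odd n then oxR a n else oxL a n.
Definition Wrow a n := if odd n then oxL a n else oxR a n.

Lemma ZW_step a n : Zrow a n.+1 = next_row (a n.+1) (Wrow a n) /\
  Wrow a n.+1 = next_row (last 0 (Zrow a n.+1)) (Zrow a n).
Proof.
rewrite /Zrow /Wrow /oxL /oxR /=.
case: (ox_rows a n) => l r /=.
by case: (odd n).
Qed.

Lemma Zrow0 a : Zrow a 0 = [:: a 0%N].
Proof. by []. Qed.
Lemma Wrow0 a : Wrow a 0 = [:: a 0%N].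
Proof. by []. Qed.

Lemma middleE a n : ox_middle a n = last 0 (Zrow a n).
Proof. by rewrite /ox_middle /Zrow; case: (odd n). Qed.
Lemma transformE a n : ox_transform a n = last 0 (Wrow a n).
Proof. by rewrite /ox_transform /Wrow; case: (odd n). Qed.

Definition sc (j : nat) : int := (-1) ^+ (j.+1)./2.
Definition tc (j : nat) : int := (-1) ^+ j./2.

Lemma sc_succ i : sc i.+1 = - tc i.
Proof. by rewrite /sc /tc -[(i.+2)./2]/((i./2).+1) exprS mulN1r. Qed.
Lemma tc_succ i : tc i.+1 = sc i.
Proof. by []. Qed.

Definition F (m : nat -> int) n k :=
  \sum_(j < n.+1) ('C(n - k, j))%:R * sc j * m (n - j)%N.
Definition G (m : nat -> int) n k :=
  \sum_(i < n.+1) ('C(k, i))%:R * tc i * m (n - i)%N.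

Lemma F_diag m n : F m n n = m n.
Proof.
rewrite /F subnn big_ord_recl big1 ?addr0 => [|i _]; last by rewrite bin0n mul0r mul0r.
by rewrite bin0 subn0 /sc /tc /= expr0 !mul1r.
Qed.

Lemma G_zero m n : G m n 0 = m n.
Proof.
rewrite /G big_ord_recl big1 ?addr0 => [|i _]; last by rewrite bin0n mul0r mul0r.
by rewrite bin0 subn0 /sc /tc /= expr0 !mul1r.
Qed.

Lemma F_step m n k : (k <= n)%N -> F m n.+1 k = F m n.+1 k.+1 - G m n (n - k).
Proof.
move=> Hk; rewrite /F /G subSn // subSS.
set q := (n - k)%N.
rewrite big_ord_recl [in X in _ = X - _]big_ord_recl bin0 subn0 -addrA; congr (_ + _); first by rewrite bin0.
rewrite -sumrB; apply: eq_bigr => i _.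
rewrite lift0 binS subSS sc_succ natrD; ring.
Qed.

Lemma G_step m n k : (k <= n)%N -> G m n.+1 k.+1 = G m n.+1 k + F m n (n - k).
Proof.
move=> Hk; rewrite /F /G subKn //.
rewrite big_ord_recl [in X in _ = X + _]big_ord_recl bin0 subn0 -addrA; congr (_ + _); first by rewrite bin0.
rewrite -big_split; apply: eq_bigr => i _.
rewrite lift0 binS subSS tc_succ natrD /=; ring.
Qed.
Opaque F G.

Lemma main_rows_gen a (m : nat -> int) (Hm : forall n, m n = last 0 (Zrow a n)) n :
 size (Zrow a n) = n.+1 /\ size (Wrow a n) = n.+1 /\
 (forall k, (k <= n)%N -> nth 0 (Zrow a n) k = F m n k) /\
 (forall k, (k <= n)%N -> nth 0 (Wrow a n) k = G m n k).
Proof.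
elim: n => [|n [sZ [sW [HZ HW]]]].
  have m0 : m 0%N = a 0%N by rewrite Hm.
  split; first by []. split; first by [].
  split=> k; rewrite leqn0 => /eqP ->.
    by rewrite F_diag m0.
  by rewrite G_zero m0.
have [EZ EW] := ZW_step a n.
have sZ' : size (Zrow a n.+1) = n.+2 by rewrite EZ size_next_row sW.
have sW' : size (Wrow a n.+1) = n.+2 by rewrite EW size_next_row sZ.
have mlast : m n.+1 = nth 0 (Zrow a n.+1) n.+1 by rewrite Hm -nth_last sZ'.
have hz : forall k, (k <= n.+1)%N ->
    nth 0 (Zrow a n.+1) k = a n.+1 + \sum_(i < k) G m n (n - i).
  move=> k Hk; rewrite EZ nth_next_row ?sW //; congr (_ + _).
  apply: eq_bigr => i _.
  have Hi : (i < n.+1)%N by apply: leq_trans (ltn_ord i) Hk.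
  by rewrite nth_rev sW // subSS HW // leq_subr.
have D : forall d k, (k + d)%N = n.+1 ->
    F m n.+1 k = a n.+1 + \sum_(i < k) G m n (n - i).
  elim=> [|d IHd] k Hkd.
    by move: Hkd; rewrite addn0 => ->; rewrite F_diag mlast hz.
  have Hk : (k <= n)%N by move: Hkd; rewrite addnS => -[<-]; apply: leq_addr.
  rewrite F_step // IHd; last by rewrite addSn -addnS.
  by rewrite big_ord_recr /= addrA addrK.
have hw : forall k, (k <= n.+1)%N ->
    nth 0 (Wrow a n.+1) k = m n.+1 + \sum_(i < k) F m n (n - i).
  move=> k Hk; rewrite EW nth_next_row ?sZ // -Hm; congr (_ + _).
  apply: eq_bigr => i _.
  have Hi : (i < n.+1)%N by apply: leq_trans (ltn_ord i) Hk.
  by rewrite nth_rev sZ // subSS HZ // leq_subr.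
have U : forall k, (k <= n.+1)%N ->
    G m n.+1 k = m n.+1 + \sum_(i < k) F m n (n - i).
  elim=> [|k IHk] Hk; first by rewrite G_zero big_ord0 addr0.
  rewrite G_step // IHk; last exact: ltnW.
  by rewrite big_ord_recr addrA.
split; first exact: sZ'. split; first exact: sW'.
split=> k Hk.
  by rewrite hz // (D (n.+1 - k)%N) // subnKC.
by rewrite hw // U.
Qed.
Opaque F G.

Lemma a_eq a n : a n = \sum_(j < n.+1) ('C(n, j))%:R * sc j * ox_middle a (n - j)%N.
Proof.
have [sZ [sW [HZ HW]]] := main_rows_gen (middleE a) n.
have h0 : nth 0 (Zrow a n) 0 = a n.
  by case: n sZ sW HZ HW => [|n] // *; rewrite (ZW_step a n).1.
rewrite -h0 HZ //.
Transparent F. by rewrite /F subn0.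
Qed.

Lemma b_eq a n : ox_transform a n = \sum_(i < n.+1) ('C(n, i))%:R * tc i * ox_middle a (n - i)%N.
Proof.
have [sZ [sW [HZ HW]]] := main_rows_gen (middleE a) n.
rewrite transformE -nth_last sW /= HW //.
Qed.

Lemma conv (u v : nat -> int) n :
  fps_mul (fun i => (u i)%:~R / (i`!)%:R) (egf v) n =
  (\sum_(i < n.+1) ('C(n, i))%:R * u i * v (n - i)%N)%:~R / (n`!)%:R.
Proof.
rewrite /fps_mul /egf rmorph_sum mulr_suml; apply: eq_bigr => i _.
rewrite !rmorphM rmorph_nat.
have Hi : (i <= n)%N by rewrite -ltnS.
have Hf := bin_fact Hi.
have c0 : ('C(n, i))%:R != 0 :> rat by rewrite pnatr_eq0 -lt0n bin_gt0.
have f1 : (i`!)%:R != 0 :> rat by rewrite pnatr_eq0 -lt0n fact_gt0.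
have f2 : ((n - i)`!)%:R != 0 :> rat by rewrite pnatr_eq0 -lt0n fact_gt0.
rewrite -Hf !natrM.
by field; rewrite c0 f1 f2.
Qed.
Opaque F G.

Lemma sgn_intr k : (((-1) ^+ k : int))%:~R = (-1) ^+ k :> rat.
Proof. by rewrite rmorphXn rmorphN1. Qed.

Lemma cs_sub : fps_sub fps_cos fps_sin = fun i => (sc i)%:~R / (i`!)%:R.
Proof.
apply: functional_extensionality => i.
rewrite /fps_sub /fps_cos /fps_sin /sc sgn_intr -[(i.+1)./2]/(uphalf i) uphalf_half.
case: (odd i) => /=; last by rewrite subr0.
by rewrite exprS mulN1r mulNr sub0r.
Qed.

Lemma cs_add : fps_add fps_cos fps_sin = fun i => (tc i)%:~R / (i`!)%:R.
Proof.
apply: functional_extensionality => i.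
rewrite /fps_add /fps_cos /fps_sin /tc sgn_intr.
by case: (odd i) => /=; rewrite ?add0r ?addr0.
Qed.

Definition PP N (f : fps) : {poly rat} := \poly_(i < N) f i.

Lemma mulP (f g : fps) n N : (n < N)%N -> fps_mul f g n = (PP N f * PP N g)`_n.
Proof.
move=> Hn; rewrite coefM /fps_mul; apply: eq_bigr => i _.
have Hi : (i < N)%N by apply: leq_ltn_trans Hn; rewrite -ltnS.
have Hj : (n - i < N)%N by apply: leq_ltn_trans Hn; apply: leq_subr.
by rewrite !coef_poly Hi Hj.
Qed.

Lemma coef_agree (p q r : {poly rat}) N n :
  (forall i, (i < N)%N -> p`_i = q`_i) -> (n < N)%N -> (r * p)`_n = (r * q)`_n.
Proof.
move=> H Hn; rewrite !coefM; apply: eq_bigr => i _.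
by rewrite H //; apply: leq_ltn_trans Hn; apply: leq_subr.
Qed.

Lemma fps_mul_comm f g : fps_mul f g = fps_mul g f.
Proof.
apply: functional_extensionality => n.
by rewrite (mulP _ _ (ltnSn n)) (mulP g f (ltnSn n)) mulrC.
Qed.

Lemma fps_mul_assoc f g h : fps_mul f (fps_mul g h) = fps_mul (fps_mul f g) h.
Proof.
apply: functional_extensionality => n.
rewrite (mulP _ _ (ltnSn n)) (mulP (fps_mul f g) h (ltnSn n)).
rewrite (@coef_agree _ (PP n.+1 g * PP n.+1 h) _ n.+1) //; last first.
  by move=> i Hi; rewrite /PP coef_poly Hi (mulP _ _ Hi).
rewrite [in RHS]mulrC (@coef_agree (PP n.+1 (fps_mul f g)) (PP n.+1 f * PP n.+1 g) _ n.+1) //; last first.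
  by move=> i Hi; rewrite /PP coef_poly Hi (mulP _ _ Hi).
by rewrite mulrA [in RHS]mulrC.
Qed.

Theorem theorem2 (a : nat -> int) :
  fps_mul (fps_sub fps_cos fps_sin) (egf (ox_middle a)) = egf a /\
  fps_mul (fps_sub fps_cos fps_sin) (egf (ox_transform a))
    = fps_mul (fps_add fps_cos fps_sin) (egf a).
Proof.
have Ea : egf a = fps_mul (fps_sub fps_cos fps_sin) (egf (ox_middle a)).
  apply: functional_extensionality => n.
  by rewrite cs_sub conv /egf -a_eq.
have Eb : egf (ox_transform a) = fps_mul (fps_add fps_cos fps_sin) (egf (ox_middle a)).
  apply: functional_extensionality => n.
  by rewrite cs_add conv /egf -b_eq.
split; first by rewrite Ea.
rewrite Eb Ea !fps_mul_assoc.
by rewrite (fps_mul_comm (fps_sub _ _)).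
Qed.
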